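(* Let $\Delta^m$ be the last matrix produced by the Incremental Sweeping Algorithm applied to a connection matrix $\Delta\in\mathbb F^{m\times m}$. Then every entry of $\Delta^m$ at a primary pivot position is nonzero, and every nonzero entry of $\Delta^m$ either is at a primary pivot position or lies strictly above the unique primary pivot position of its column. In particular every column of $\Delta^m$ containing no primary pivot is zero.
   Context: Throughout, $\mathbb F$ is a field and $m\ge1$. $U^{pq}$ is the $m\times m$ matrix whose only nonzero entry is a $1$ in position $(p,q)$. Superscripts on matrices are indices, not powers. A connection matrix (over $\mathbb F$) is a matrix $\Delta\in\mathbb F^{m\times m}$ together with a partition $\{1,\dots,m\}=J_0\sqcup\cdots\sqcup J_b$ (the column/row partition; the $J_k$ need not consist of consecutive integers) such that $\Delta$ is upper triangular, $\Delta\Delta=0$, and $\Delta_{ij}=0$ unless $i<j$ and $(i,j)\in\bigcup_{k=1}^bJ_{k-1}\times J_k$. For $1\le r\le m-1$ the $r$-th diagonal is $\{(j-r,j):r<j\le m\}$. Incremental Sweeping Algorithm (ISA) applied to a connection matrix $\Delta$: set $\Delta^0=\Delta^1=\Delta$. For $r=1,\dots,m-1$ in turn: (Markup) for every position $(j-r,j)$ on the $r$-th diagonal with $\Delta^r_{j-r,j}\ne0$ such that no position in column $j$ was marked as a primary pivot at an earlier iteration: if some position $(j-r,p)$ of row $j-r$ was marked as a primary pivot at an earlier iteration, mark $(j-r,j)$ as a change-of-basis pivot of iteration $r$; otherwise mark $(j-r,j)$ permanently as a primary pivot (marked at iteration $r$). (Update) Let $T^r=I-\sum \frac{\Delta^r_{j-r,j}}{\Delta^r_{j-r,p}}U^{pj}$,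 the sum running over all change-of-basis pivots $(j-r,j)$ of iteration $r$, where $(j-r,p)$ is the primary pivot position in row $j-r$; set $\Delta^{r+1}=(T^r)^{-1}\Delta^rT^r$. The primary pivots of $\Delta^m$ are all positions marked as primary pivots at iterations $1,\dots,m-1$. *)

(* Defs.v *)
From HB Require Import structures.
From mathcomp Require Import all_boot all_order all_algebra.
Set Implicit Arguments. Unset Strict Implicit. Unset Printing Implicit Defensive.
Import GRing.Theory.
Local Open Scope ring_scope.

(* Indices are 0-based: 'I_m = {0,...,m-1}; position (i,j) in the paper is
   (i+1, j+1) here.  The partition J_0 ⊔ ... ⊔ J_b is encoded by the function
   deg : 'I_m -> nat with deg i = k iff i ∈ J_k, and bound b. *)

Definition is_connection_matrix (F : fieldType) (m b : nat)
    (deg : 'I_m -> nat) (D : 'M[F]_m) : Prop :=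
  [/\ forall i, (deg i <= b)%N,
      forall i j : 'I_m, (j < i)%N -> D i j = 0,
      D *m D = 0 &
      forall i j : 'I_m, D i j != 0 ->
        (i < j)%N /\ (1 <= deg j <= b)%N /\ deg i = (deg j).-1 ].

(* State of the ISA: current matrix Δ^r and the set of positions marked as
   primary pivots so far. *)
Section ISA.
Variables (F : fieldType) (m : nat).

Definition isa_cand (r : nat) (D : 'M[F]_m) (P : {set 'I_m * 'I_m})
    (i j : 'I_m) : bool :=
  [&& (nat_of_ord j == i + r)%N, D i j != 0 & [forall k, (k, j) \notin P]].

Definition has_row_piv (P : {set 'I_m * 'I_m}) (i : 'I_m) : bool :=
  [exists p, (i, p) \in P].

Definition row_piv (P : {set 'I_m * 'I_m}) (i : 'I_m) : 'I_m :=
  odflt i [pick p | (i, p) \in P].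

Definition cob_pivots r D P : {set 'I_m * 'I_m} :=
  [set x | isa_cand r D P x.1 x.2 && has_row_piv P x.1].

Definition new_primary r D P : {set 'I_m * 'I_m} :=
  [set x | isa_cand r D P x.1 x.2 && ~~ has_row_piv P x.1].

Definition isa_T r (D : 'M[F]_m) P : 'M[F]_m :=
  1%:M - \sum_(x in cob_pivots r D P)
           (D x.1 x.2 / D x.1 (row_piv P x.1)) *: delta_mx (row_piv P x.1) x.2.

Definition isa_step r (s : 'M[F]_m * {set 'I_m * 'I_m}) :
    'M[F]_m * {set 'I_m * 'I_m} :=
  let: (D, P) := s in
  let T := isa_T r D P in
  (invmx T *m D *m T, P :|: new_primary r D P).

(* isa D n = (Δ^{n+1}, primary pivots marked at iterations 1..n) *)
Fixpoint isa (D : 'M[F]_m) (n : nat) : 'M[F]_m * {set 'I_m * 'I_m} :=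
  match n with
  | 0 => (D, set0)
  | n'.+1 => isa_step n'.+1 (isa D n')
  end.

Definition isa_final (D : 'M[F]_m) : 'M[F]_m := (isa D m.-1).1.
Definition isa_primary (D : 'M[F]_m) : {set 'I_m * 'I_m} := (isa D m.-1).2.

End ISA.

(* Main.v *)
Require Import Defs.
From HB Require Import structures.
From mathcomp Require Import all_boot all_order all_algebra.
From mathcomp Require Import zify.
Set Implicit Arguments. Unset Strict Implicit.
Import GRing.Theory.
Local Open Scope ring_scope.

Section Step.
Variables (F : fieldType) (m : nat).

Definition Inv (n : nat) (D : 'M[F]_m) (P : {set 'I_m * 'I_m}) : Prop :=
  [/\ forall i p, (i, p) \in P -> [/\ (i < p)%N, (p <= i + n)%N & D i p != 0],
      forall i i' p, (i, p) \in P -> (i', p) \in P -> i = i' &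
      forall x y : 'I_m, (y <= x + n)%N -> D x y != 0 ->
        exists k, (k, y) \in P /\ (x <= k)%N].

Lemma rpP (P : {set 'I_m * 'I_m}) i : has_row_piv P i -> (i, row_piv P i) \in P.
Proof.
rewrite /row_piv; case: pickP => [p Hp|H] //=.
by move/existsP => [p Hp]; rewrite H in Hp.
Qed.

Variables (D : 'M[F]_m) (P : {set 'I_m * 'I_m}) (n : nat).
Hypothesis HI : Inv n D P.

Let r := n.+1.
Let C := cob_pivots r D P.
Let rp := row_piv P.
Let c (x : 'I_m * 'I_m) := D x.1 x.2 / D x.1 (rp x.1).
Let N : 'M[F]_m := \sum_(x in C) c x *: delta_mx (rp x.1) x.2.

Lemma CP i j : (i, j) \in C ->
  [/\ nat_of_ord j = (i + r)%N, D i j != 0, forall k, (k, j) \notin P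
    & (i, rp i) \in P].
Proof.
rewrite inE /= /isa_cand => /andP [/and3P [/eqP -> -> /forallP H] Hr].
by split => //; exact: rpP.
Qed.

Lemma C_piv i j : (i, j) \in C ->
  [/\ (i < rp i)%N, (rp i <= i + n)%N, D i (rp i) != 0 & (rp i < j)%N].
Proof.
move=> /CP [Hj _ _ Hp]; case: HI => I1 _ _.
case: (I1 _ _ Hp) => h1 h2 h3; split => //; rewrite Hj /r; lia.
Qed.

Lemma Nentry a b : N a b = \sum_(x in C) c x * ((a == rp x.1) && (b == x.2))%:R.
Proof.
rewrite /N summxE; apply: eq_bigr => x _; by rewrite !mxE.
Qed.

Lemma NA a b : N a b != 0 -> exists i, (i, b) \in C /\ a = rp i.
Proof.
rewrite Nentry => H.
case: (pickP [pred x | (x \in C) && ((a == rp x.1) && (b == x.2))]) => [x|H0].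
  move=> /andP [xC /andP [/eqP -> /eqP ->]]; exists x.1; split => //.
  by case: x xC.
rewrite big1 ?eqxx // in H => x xC; have := H0 x; rewrite /= xC /=.
by move=> ->; rewrite mulr0.
Qed.

Lemma C_col i i' b : (i, b) \in C -> (i', b) \in C -> i = i'.
Proof.
move=> /CP [h1 _ _ _] /CP [h2 _ _ _]; apply: val_inj => /=; lia.
Qed.

Lemma NB i b : (i, b) \in C -> N (rp i) b = c (i, b).
Proof.
move=> iC; rewrite Nentry (bigD1 (i, b)) //= !eqxx mulr1 big1 ?addr0 //.
move=> [x1 x2] /andP [xC xne] /=.
case: (boolP ((rp i == rp x1) && (b == x2))) => [/andP [_ /eqP eb]|_];
  last by rewrite mulr0.
subst x2; have := C_col iC xC => ei; subst x1; by rewrite eqxx in xne.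
Qed.

Lemma N_upper a b : N a b != 0 -> (a < b)%N.
Proof. by move=> /NA [i [iC ->]]; case: (C_piv iC). Qed.

Lemma N_sq : N *m N = 0.
Proof.
apply/matrixP => a b; rewrite !mxE big1 // => z _.
case: (eqVneq (N a z) 0) => [->|Haz]; first by rewrite mul0r.
case: (eqVneq (N z b) 0) => [->|Hzb]; first by rewrite mulr0.
exfalso; have [i [iC _]] := NA Haz; have [i' [i'C ez]] := NA Hzb.
case: (CP iC) => _ _ H _; case: (CP i'C) => _ _ _ Hp.
by have := H i'; rewrite ez Hp.
Qed.

Lemma T_eq : isa_T r D P = 1%:M - N.
Proof. by []. Qed.

Lemma invT : invmx (1%:M - N) = 1%:M + N.
Proof.
have E : (1%:M - N) *m (1%:M + N) = 1%:M.
  rewrite mulmxDr mulmx1 mulmxBl mul1mx N_sq subr0.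
  by rewrite addrAC addrK.
have [U _] := mulmx1_unit E.
by have := mulKmx U (1%:M + N); rewrite E mulmx1.
Qed.

Let M := D *m (1%:M - N).
Let D' := (1%:M + N) *m M.

Lemma D'E : (isa_step r (D, P)).1 = D'.
Proof. by rewrite /isa_step /= T_eq invT /D' /M mulmxA. Qed.

Lemma ME z y : M z y = D z y - \sum_w D z w * N w y.
Proof. by rewrite /M mulmxBr mulmx1 !mxE. Qed.

Lemma D'E2 x y : D' x y = M x y + \sum_z N x z * M z y.
Proof. by rewrite /D' mulmxDl mul1mx !mxE. Qed.

Lemma M_noncob z y : (forall i, (i, y) \notin C) -> M z y = D z y.
Proof.
move=> H; rewrite ME big1 ?subr0 // => w _.
case: (eqVneq (N w y) 0) => [->|Hw]; first by rewrite mulr0.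
by have [i [iC _]] := NA Hw; have := H i; rewrite iC.
Qed.

Lemma M_cob i y z : (i, y) \in C -> M z y = D z y - c (i, y) * D z (rp i).
Proof.
move=> iC; rewrite ME (bigD1 (rp i)) //= NB // big1 ?addr0 ?(mulrC (c _)) //.
move=> w wne.
case: (eqVneq (N w y) 0) => [->|Hw]; first by rewrite mulr0.
have [i' [i'C ew]] := NA Hw; have := C_col iC i'C => ei; subst.
by rewrite eqxx in wne.
Qed.

Lemma D'_eq (x y : 'I_m) : (forall z : 'I_m, (x < z)%N -> M z y = 0) -> D' x y = M x y.
Proof.
move=> H; rewrite D'E2 big1 ?addr0 // => z _.
case: (eqVneq (N x z) 0) => [->|Hz]; first by rewrite mul0r.
by rewrite H ?mulr0 // N_upper.
Qed.

Lemma D'_nz (x y : 'I_m) : D' x y != 0 ->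
  M x y != 0 \/ exists z : 'I_m, (x < z)%N /\ M z y != 0.
Proof.
move=> H; case: (pickP [pred z : 'I_m | (x < z)%N && (M z y != 0)]) => [z /andP [h1 h2]|H0].
  by right; exists z.
left; rewrite -D'_eq // => z xz; have := H0 z; rewrite /= xz /=.
by move/negbFE/eqP.
Qed.

Let Nw := new_primary r D P.

Lemma NwP i j : (i, j) \in Nw ->
  [/\ nat_of_ord j = (i + r)%N, D i j != 0, forall k, (k, j) \notin P
    & ~~ has_row_piv P i].
Proof.
rewrite inE /= /isa_cand => /andP [/and3P [/eqP -> -> /forallP H] Hr].
by split.
Qed.

Lemma step_inv : Inv r D' (P :|: Nw).
Proof.
case: HI => I1 I2 I4.
have nocobP : forall k y, (k, y) \in P -> forall i, (i, y) \notin C.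
  move=> k y kP i; apply/negP => /CP [_ _ H _]; by have := H k; rewrite kP.
split.
- move=> i p; rewrite inE => /orP [iP|iN].
    case: (I1 _ _ iP) => h1 h2 h3; split => //; first by rewrite /r; lia.
    have ncp := nocobP _ _ iP.
    rewrite D'_eq; first by rewrite (M_noncob _ ncp).
    move=> z iz; rewrite (M_noncob _ ncp).
    apply/eqP; apply: contraT => Hz.
    have [k [kP zk]] := I4 z p ltac:(lia) Hz.
    have := I2 _ _ _ kP iP => ek; subst k; lia.
  case: (NwP iN) => h1 h2 h3 h4.
  have nc : forall i', (i', p) \notin C.
    move=> i'; apply/negP => i'C; case: (CP i'C) => h1' _ _ h4'.
    have ei : i' = i by apply: val_inj => /=; lia.
    subst i'; by move: h4; rewrite /has_row_piv; apply/negP/negPn/existsP; exists (rp i).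
  split; [by rewrite h1 /r; lia | by rewrite h1 /r; lia |].
  rewrite D'_eq; first by rewrite M_noncob.
  move=> z iz; rewrite M_noncob //; apply/eqP; apply: contraT => Hz.
  have [k [kP _]] := I4 z p ltac:(lia) Hz.
  by have := h3 k; rewrite kP.
- move=> i i' p; rewrite !in_setU => /orP [iP|iN] /orP [i'P|i'N].
  + exact: I2 iP i'P.
  + by case: (NwP i'N) => _ _ H _; have := H i; rewrite iP.
  + by case: (NwP iN) => _ _ H _; have := H i'; rewrite i'P.
  + case: (NwP iN) => h1 _ _ _; case: (NwP i'N) => h1' _ _ _.
    apply: val_inj => /=; lia.
- move=> x y hxy.
  case: (pickP (fun i => (i, y) \in C)) => [i iC|nc].
    (* cob column: entry becomes 0 *)
    case: (CP iC) => hy Dy Hcol Hp.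
    case: (C_piv iC) => hp1 hp2 hp3 hp4.
    have Mz : forall z : 'I_m, (i <= z)%N -> M z y = 0.
      move=> z iz; rewrite (M_cob _ iC).
      case: (eqVneq z i) => [->|zne].
        by rewrite /c /= divfK // subrr.
      have iz' : (i < z)%N by rewrite ltn_neqAle iz andbT; apply/eqP => e;
        move/eqP: zne; apply; apply: val_inj.
      have -> : D z y = 0.
        apply/eqP; apply: contraT => Hz.
        have [k [kP _]] := I4 z y ltac:(lia) Hz.
        by have := Hcol k; rewrite kP.
      have -> : D z (rp i) = 0.
        apply/eqP; apply: contraT => Hz.
        have [k [kP zk]] := I4 z (rp i) ltac:(lia) Hz.
        have := I2 _ _ _ kP Hp => ek; subst k; lia.
      by rewrite mulr0 subrr.
    rewrite D'_eq; last by move=> z xz; apply: Mz; lia.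
    by rewrite Mz ?eqxx //; lia.
  have nc' : forall i, (i, y) \notin C by move=> i; rewrite nc.
  move=> /D'_nz; rewrite !M_noncob //.
  have ex_piv : forall z : 'I_m, (x <= z)%N -> D z y != 0 ->
      exists k, (k, y) \in P :|: Nw /\ (x <= k)%N.
    move=> z xz Hz.
    case: (leqP y (z + n)) => hzy.
      have [k [kP zk]] := I4 z y hzy Hz.
      by exists k; rewrite inE kP; split => //; lia.
    have ez : nat_of_ord y = (z + r)%N by rewrite /r; lia.
    case: (pickP (fun k => (k, y) \in P)) => [k kP|nP].
      case: (I1 _ _ kP) => _ h2 _; exists k; rewrite inE kP; split => //; lia.
    exists z; split => //; rewrite inE; apply/orP; right.
    rewrite inE /= /isa_cand ez eqxx Hz /=; apply/andP; split.
      by apply/forallP => k; rewrite nP.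
    apply/negP => hr; have := nc z.
    rewrite inE /= /isa_cand ez eqxx Hz hr /= andbT.
    by move=> /negbT/negP; apply; apply/forallP => k; rewrite nP.
  case=> [Hx|[z [xz Hz]]].
    exact: ex_piv x (leqnn _) Hx.
  rewrite M_noncob // in Hz.
  exact: ex_piv z (ltnW xz) Hz.
Qed.

End Step.

Lemma isa_inv (F : fieldType) (m b : nat) (deg : 'I_m -> nat) (D : 'M[F]_m) :
  is_connection_matrix b deg D ->
  forall n, Inv n (isa D n).1 (isa D n).2.
Proof.
case=> _ _ _ Hc; elim => [|n IH] /=.
  split; first by move=> i p; rewrite in_set0.
    by move=> i i' p; rewrite in_set0.
  move=> x y hxy Hxy; have [h _] := Hc _ _ Hxy; exfalso; lia.
move: IH; case: (isa D n) => D0 P0 /= IH.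
have := step_inv IH; rewrite -(D'E D0 P0 n).
by [].
Qed.

Theorem mainTheorem3 (F : fieldType) (m b : nat) (deg : 'I_m -> nat)
    (D : 'M[F]_m) :
  (0 < m)%N ->
  is_connection_matrix b deg D ->
  let Dm := isa_final D in
  let P := isa_primary D in
  [/\ (forall i j, (i, j) \in P -> Dm i j != 0),
      (forall i j, Dm i j != 0 ->
         (i, j) \in P \/
         exists k, [/\ (k, j) \in P, (i < k)%N &
                       forall k', (k', j) \in P -> k' = k]) &
      (forall j, (forall k, (k, j) \notin P) -> forall i, Dm i j = 0)].
Proof.
move=> m0 HD Dm P.
have [I1 I2 I4] := isa_inv HD m.-1.
have hb : forall i j : 'I_m, (j <= i + m.-1)%N.
  move=> i j; have := ltn_ord j; lia.
split.
- by move=> i j /I1 [].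
- move=> i j Hz; have [k [kP ik]] := I4 i j (hb i j) Hz.
  case: (eqVneq k i) => [ek|ne]; first by left; rewrite -ek.
  right; exists k; split => //.
    rewrite ltn_neqAle ik andbT; apply/eqP => e; move/eqP: ne; apply.
    exact: val_inj.
  by move=> k' k'P; exact: I2 k'P kP.
- move=> j H i; apply/eqP; apply: contraT => Hz.
  have [k [kP _]] := I4 i j (hb i j) Hz.
  by have := H k; rewrite kP.
Qed.
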